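(* Let $R$ and $S$ be two non-crossing geometric trees in the plane (vertices in general position) whose convex hulls intersect. Then either the convex hull of one of them lies strictly inside the convex hull of the other, or there exist two adjacent vertices on the convex hull of one of the trees whose visibility is blocked by the other tree (i.e., the segment joining them intersects the other tree).
   Context: A geometric tree is a plane straight-line embedding of a tree in $\mathbb{R}^2$, viewed as a subset of $\mathbb{R}^2$; two trees are non-crossing if they are disjoint as point sets. *)

(* Defs.v *)
From HB Require Import structures.
From mathcomp Require Import all_boot all_order all_algebra.
From mathcomp Require Import reals.
Set Implicit Arguments. Unset Strict Implicit. Unset Printing Implicit Defensive.
Import Order.TTheory GRing.Theory Num.Theory.
Local Open Scope ring_scope.

Section Geo.
Variable R : realType.
Definition point := (R * R)%type.

Definition in_seg (a b p : point) : Prop :=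
  exists t : R, 0 <= t <= 1 /\
    p = ((1 - t) * a.1 + t * b.1, (1 - t) * a.2 + t * b.2).

Definition orient (a b c : point) : R :=
  (b.1 - a.1) * (c.2 - a.2) - (b.2 - a.2) * (c.1 - a.1).

Definition collinear (a b c : point) : Prop := orient a b c = 0.

Definition general_position (I : finType) (f : I -> point) : Prop :=
  forall i j k : I, i != j -> j != k -> i != k -> ~ collinear (f i) (f j) (f k).

Definition in_hull (V : finType) (pos : V -> point) (p : point) : Prop :=
  exists l : V -> R, (forall v, 0 <= l v) /\ \sum_(v : V) l v = 1 /\
    p = (\sum_(v : V) l v * (pos v).1, \sum_(v : V) l v * (pos v).2).

Definition in_interior (A : point -> Prop) (p : point) : Prop :=
  exists eps : R, 0 < eps /\
    forall q : point, (q.1 - p.1) ^+ 2 + (q.2 - p.2) ^+ 2 < eps -> A q.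

(* A geometric tree: vertex set V (finite, nonempty), injective placement pos,
   a simple graph e which is a tree (connected and acyclic), drawn with
   straight-line edges forming a plane embedding. *)
Definition geom_tree (V : finType) (pos : V -> point) (e : rel V) : Prop :=
  [/\ (0 < #|V|)%N, injective pos, symmetric e & irreflexive e] /\
  [/\ (forall x y : V, connect e x y),
      (forall c : seq V, (2 < size c)%N -> ~~ ucycleb e c),
      (forall u v w : V, e u v -> in_seg (pos u) (pos v) (pos w) -> w = u \/ w = v) &
      (forall u v x y : V, e u v -> e x y -> ~ ([set u; v] = [set x; y]) ->
         forall p, in_seg (pos u) (pos v) p -> in_seg (pos x) (pos y) p ->
           exists w : V, [/\ (w == u) || (w == v), (w == x) || (w == y) & p = pos w])].

Definition in_tree (V : finType) (pos : V -> point) (e : rel V) (p : point) : Prop :=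
  (exists v : V, p = pos v) \/
  (exists u v : V, e u v /\ in_seg (pos u) (pos v) p).

(* u and v are adjacent vertices on the convex hull of the point family pos:
   [pos u, pos v] is an edge of the hull polygon, i.e. all other points lie
   strictly on one side of the line through pos u and pos v. *)
Definition hull_adjacent (V : finType) (pos : V -> point) (u v : V) : Prop :=
  u != v /\
  ((forall w : V, w != u -> w != v -> 0 < orient (pos u) (pos v) (pos w)) \/
   (forall w : V, w != u -> w != v -> orient (pos u) (pos v) (pos w) < 0)).

Definition join_pos (V W : finType) (f : V -> point) (g : W -> point)
  (x : (V + W)%type) : point :=
  match x with inl v => f v | inr w => g w end.

End Geo.

(* Main.v *)
Require Import Defs.
From HB Require Import structures.
From mathcomp Require Import all_boot all_order all_algebra.
From mathcomp Require Import reals ring lra.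
From Stdlib Require Import ClassicalEpsilon Classical.
Import Order.TTheory GRing.Theory Num.Theory.
Local Open Scope ring_scope.
Set Implicit Arguments. Unset Strict Implicit. Unset Printing Implicit Defensive.

Section Geo2.
Variable R : realType.
Implicit Types a b c p q z : point R.

Definition cvx a b (t : R) : point R := ((1-t)*a.1 + t*b.1, (1-t)*a.2 + t*b.2).

Lemma orient_cyc a b c : orient a b c = orient b c a.
Proof. rewrite /orient; ring. Qed.
Lemma orient_swap a b c : orient a b c = - orient b a c.
Proof. rewrite /orient; ring. Qed.
Lemma orient_sum a b c p : orient b c p + orient c a p + orient a b p = orient a b c.
Proof. rewrite /orient; ring. Qed.
Lemma orient_cvx a b p q t : orient a b (cvx p q t) = (1-t) * orient a b p + t * orient a b q.
Proof. rewrite /orient /cvx /=; ring. Qed.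
Lemma orient_aa a p : orient a a p = 0.
Proof. rewrite /orient; ring. Qed.
Lemma orient_ab_a a b : orient a b a = 0.
Proof. rewrite /orient; ring. Qed.
Lemma orient_ab_b a b : orient a b b = 0.
Proof. rewrite /orient; ring. Qed.
Lemma cvx_cvx p q s r : cvx (cvx p q s) q r = cvx p q (s + r * (1 - s)).
Proof. rewrite /cvx /=; congr (_,_); ring. Qed.
Lemma cvx0 p q : cvx p q 0 = p.
Proof. case: p => ??; rewrite /cvx /=; congr (_,_); ring. Qed.
Lemma cvx1 p q : cvx p q 1 = q.
Proof. case: q => ??; rewrite /cvx /=; congr (_,_); ring. Qed.
Lemma cvxC p q t : cvx p q t = cvx q p (1 - t).
Proof. rewrite /cvx /=; congr (_,_); ring. Qed.


Lemma bary1 a b c x : orient a b c * x.1 = orient b c x * a.1 + orient c a x * b.1 + orient a b x * c.1.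
Proof. rewrite /orient; ring. Qed.
Lemma bary2 a b c x : orient a b c * x.2 = orient b c x * a.2 + orient c a x * b.2 + orient a b x * c.2.
Proof. rewrite /orient; ring. Qed.

Lemma seg_lem a b c x : 0 < orient a b c -> orient b c x = 0 -> 0 <= orient c a x ->
  0 <= orient a b x -> in_seg b c x.
Proof.
move=> HD Ha Hb Hc.
have Hs := orient_sum a b c x. have H1 := bary1 a b c x. have H2 := bary2 a b c x.
move: HD Ha Hb Hc Hs H1 H2.
set D := orient a b c; set al := orient b c x; set be := orient c a x; set ga := orient a b x.
clearbody D al be ga => HD -> Hb Hc Hs H1 H2.
have DN : D != 0 by rewrite gt_eqF.
exists (ga / D); split.
  apply/andP; split; first by apply: divr_ge0 => //; apply: ltW.
  by rewrite ler_pdivrMr // mul1r -Hs add0r lerDr.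
case: x H1 H2 => x1 x2 /= H1 H2.
have -> : x1 = (0 * a.1 + be * b.1 + ga * c.1) / D by rewrite -H1 mulrAC divff // mul1r.
have -> : x2 = (0 * a.2 + be * b.2 + ga * c.2) / D by rewrite -H2 mulrAC divff // mul1r.
rewrite -Hs add0r in DN *; rewrite /cvx /=; congr (_,_); by field.
Qed.

Lemma tri_cvx a b c x : 0 < orient b c x -> 0 < orient c a x -> 0 < orient a b x ->
  x = cvx (cvx a b (orient c a x / (orient b c x + orient c a x))) c (orient a b x / orient a b c).
Proof.
move=> Ha Hb Hc.
have Hs := orient_sum a b c x. have H1 := bary1 a b c x. have H2 := bary2 a b c x.
move: Ha Hb Hc Hs H1 H2.
set D := orient a b c; set al := orient b c x; set be := orient c a x; set ga := orient a b x.
clearbody D al be ga => Ha Hb Hc Hs H1 H2.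
have DN : D != 0 by rewrite -Hs gt_eqF // !addr_gt0.
have AB : al + be != 0 by rewrite gt_eqF // !addr_gt0.
case: x H1 H2 => x1 x2 /= H1 H2.
have -> : x1 = (al * a.1 + be * b.1 + ga * c.1) / D by rewrite -H1 mulrAC divff // mul1r.
have -> : x2 = (al * a.2 + be * b.2 + ga * c.2) / D by rewrite -H2 mulrAC divff // mul1r.
rewrite -Hs in DN *; rewrite /cvx /=; congr (_,_); field; rewrite ?AB ?DN //.
Qed.

Lemma tri_in01 (al be ga : R) : 0 < al -> 0 < be -> 0 < ga ->
  (0 <= be / (al + be) <= 1) /\ (0 <= ga / (al + be + ga) <= 1).
Proof.
move=> Ha Hb Hc; split; apply/andP; split.
- by apply: divr_ge0; apply: ltW => //; rewrite addr_gt0.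
- by rewrite ler_pdivrMr ?mul1r ?addr_gt0 // lerDr ltW.
- by apply: divr_ge0; apply: ltW => //; rewrite !addr_gt0.
- by rewrite ler_pdivrMr ?mul1r ?addr_gt0 // lerDr ltW // addr_gt0.
Qed.

Lemma ball1 a b x : 0 < orient a b x -> exists e : R, 0 < e /\
  forall q : point R, (q.1 - x.1) ^+ 2 + (q.2 - x.2) ^+ 2 < e -> 0 < orient a b q.
Proof.
move=> Ho.
set o := orient a b x; set L := (b.1 - a.1) ^+ 2 + (b.2 - a.2) ^+ 2.
have L0 : 0 <= L by rewrite /L addr_ge0 // sqr_ge0.
have L1 : 0 < 1 + L by lra.
exists (o ^+ 2 / (1 + L)); split; first by apply: divr_gt0 => //; apply: exprn_gt0.
move=> q Hq.
set d := (q.1 - x.1) ^+ 2 + (q.2 - x.2) ^+ 2 in Hq.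
set lin := (b.1 - a.1) * (q.2 - x.2) - (b.2 - a.2) * (q.1 - x.1).
have -> : orient a b q = o + lin by rewrite /o /lin /orient; ring.
have CS : lin ^+ 2 <= L * d.
  have -> : lin ^+ 2 = L * d - ((b.1 - a.1) * (q.1 - x.1) + (b.2 - a.2) * (q.2 - x.2)) ^+ 2
    by rewrite /lin /L /d; ring.
  by rewrite lerBlDr lerDl sqr_ge0.
have d0 : 0 <= d by rewrite /d addr_ge0 // sqr_ge0.
have Hd : (1 + L) * d < o ^+ 2 by rewrite mulrC -ltr_pdivlMr // ltr_pwDl.
have : lin ^+ 2 < o ^+ 2.
  apply: (le_lt_trans CS); apply: le_lt_trans Hd.
  by apply: ler_wpM2r => //; rewrite lerDr.
move=> H; move: Ho; rewrite -/o => Ho; clearbody o lin; case: (lerP 0 lin) => h; nra.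
Qed.

Lemma ball3 a b c x : 0 < orient b c x -> 0 < orient c a x -> 0 < orient a b x ->
  exists e : R, 0 < e /\ forall q : point R, (q.1 - x.1) ^+ 2 + (q.2 - x.2) ^+ 2 < e ->
  [/\ 0 < orient b c q, 0 < orient c a q & 0 < orient a b q].
Proof.
move=> /ball1 [e1 [e10 H1]] /ball1 [e2 [e20 H2]] /ball1 [e3 [e30 H3]].
exists (Order.min e1 (Order.min e2 e3)); split; first by rewrite !lt_min e10 e20 e30.
by move=> q; rewrite !lt_min => /and3P [/H1 ? /H2 ? /H3 ?].
Qed.

Lemma fz (B0 B1 C0 C1 : R) : 0 < B0 -> B1 < 0 -> 0 < C0 ->
  (0 <= C1 \/ B0 / (B0 - B1) <= C0 / (C0 - C1)) ->
  [/\ 0 < B0 / (B0 - B1) < 1, (1 - B0 / (B0 - B1)) * B0 + B0 / (B0 - B1) * B1 = 0 &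
     0 <= (1 - B0 / (B0 - B1)) * C0 + B0 / (B0 - B1) * C1].
Proof.
move=> HB0 HB1 HC0 HC.
have BN : B0 - B1 != 0 by rewrite gt_eqF // subr_gt0; apply: lt_trans HB1 HB0.
have BP : 0 < B0 - B1 by rewrite subr_gt0; apply: lt_trans HB1 HB0.
have Hs : B0 / (B0 - B1) * (B0 - B1) = B0 by rewrite divfK.
move: Hs HC; set s := B0 / (B0 - B1) => Hs HC.
have s0 : 0 < s by rewrite /s divr_gt0.
have s1 : s < 1 by rewrite /s ltr_pdivrMr // mul1r; lra.
split; first by rewrite s0 s1.
  have -> : (1 - s) * B0 + s * B1 = B0 - s * (B0 - B1) by ring.
  by rewrite Hs subrr.
case: HC => HC; first by clearbody s; nra.
case: (lerP 0 C1) => HC1; first by clearbody s; nra.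
have CP : 0 < C0 - C1 by rewrite subr_gt0; apply: lt_trans HC1 HC0.
have Ht : C0 / (C0 - C1) * (C0 - C1) = C0 by rewrite divfK // gt_eqF.
move: Ht HC; set u := C0 / (C0 - C1) => Ht HC; clearbody s u.
have E : (u - s) * (C0 - C1) = u * (C0 - C1) - s * (C0 - C1) by ring.
rewrite Ht in E.
have -> : (1 - s) * C0 + s * C1 = C0 - s * (C0 - C1) by ring.
rewrite -E.
by apply: mulr_ge0; lra.
Qed.

Lemma exit_tri a b c P0 P1 : 0 < orient a b c -> 0 <= orient a b P0 -> 0 < orient b c P0 ->
  0 < orient c a P0 -> 0 < orient a b P1 -> (orient b c P1 < 0 \/ orient c a P1 < 0) ->
  exists s : R, (0 < s <= 1) /\ (in_seg b c (cvx P0 P1 s) \/ in_seg c a (cvx P0 P1 s)).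
Proof.
move=> HD HA0 HB0 HC0 HA1 H1.
have HAs (s : R) : 0 <= s <= 1 -> 0 <= orient a b (cvx P0 P1 s).
  move=> /andP [s0 s1]; rewrite orient_cvx; apply: addr_ge0; apply: mulr_ge0 => //; lra.
case: (boolP ((orient b c P1 < 0) && ((0 <= orient c a P1) || (orient b c P0 / (orient b c P0 - orient b c P1) <= orient c a P0 / (orient c a P0 - orient c a P1))))) => [/andP [HB1 HC]|HN].
  have [/andP [s0 s1] E F] := fz HB0 HB1 HC0 (orP HC).
  exists (orient b c P0 / (orient b c P0 - orient b c P1)); split; first by rewrite s0 ltW.
  have Hs01 : 0 <= orient b c P0 / (orient b c P0 - orient b c P1) <= 1 by rewrite !ltW.
  by left; apply: seg_lem HD _ _ (HAs _ Hs01); rewrite orient_cvx.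
have [HC1 HB]: orient c a P1 < 0 /\ (0 <= orient b c P1 \/ orient c a P0 / (orient c a P0 - orient c a P1) <= orient b c P0 / (orient b c P0 - orient b c P1)).
  move: HN; rewrite negb_and negb_or -!ltNge; case/orP => [HB1|/andP [HC1 HH]].
    by case: H1 => H1; [rewrite H1 in HB1 | split => //; left; rewrite -leNgt in HB1].
  by split => //; right; apply: ltW.
have [/andP [s0 s1] E F] := fz HC0 HC1 HB0 HB.
exists (orient c a P0 / (orient c a P0 - orient c a P1)); split; first by rewrite s0 ltW.
have Hs01 : 0 <= orient c a P0 / (orient c a P0 - orient c a P1) <= 1 by rewrite !ltW.
right; apply: (@seg_lem b c a).
- by rewrite -orient_cyc.
- by rewrite orient_cvx.
- exact: (HAs _ Hs01).
- by rewrite orient_cvx.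
Qed.

Lemma sgn_cases (x : R) : x != 0 -> x < 0 \/ 0 < x.
Proof. by move=> h; case: (ltgtP x 0) => [?|?|E]; [left|right|rewrite E eqxx in h]. Qed.

Lemma exit3 a b c P0 P1 : 0 < orient b c P0 -> 0 < orient c a P0 -> 0 < orient a b P0 ->
  ~ [/\ 0 < orient b c P1, 0 < orient c a P1 & 0 < orient a b P1] ->
  orient b c P1 != 0 -> orient c a P1 != 0 -> orient a b P1 != 0 ->
  exists s : R, (0 < s <= 1) /\
    (in_seg a b (cvx P0 P1 s) \/ in_seg b c (cvx P0 P1 s) \/ in_seg c a (cvx P0 P1 s)).
Proof.
move=> H1 H2 H3 HN N1 N2 N3.
have HD : 0 < orient a b c by have := orient_sum a b c P0; lra.
have HD1 : 0 < orient b c a by rewrite -orient_cyc.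
have HD2 : 0 < orient c a b by rewrite -orient_cyc -orient_cyc.
case: (sgn_cases N3) => S3; last first.
  have [s [Hs [?|?]]] : exists s : R, (0 < s <= 1) /\ (in_seg b c (cvx P0 P1 s) \/ in_seg c a (cvx P0 P1 s)).
    apply: exit_tri => //; first by apply: ltW.
    case: (sgn_cases N1) => S1; first by left.
    case: (sgn_cases N2) => S2; first by right.
    by case: HN.
  - by exists s; split => //; right; left.
  - by exists s; split => //; right; right.
case: (sgn_cases N1) => S1; last first.
  have [s [Hs [?|?]]] : exists s : R, (0 < s <= 1) /\ (in_seg c a (cvx P0 P1 s) \/ in_seg a b (cvx P0 P1 s)).
    apply: exit_tri => //; first by apply: ltW.
    case: (sgn_cases N2) => S2; first by left.
    by right.
  - by exists s; split => //; right; right.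
  - by exists s; split => //; left.
case: (sgn_cases N2) => S2; last first.
  have [s [Hs [?|?]]] : exists s : R, (0 < s <= 1) /\ (in_seg a b (cvx P0 P1 s) \/ in_seg b c (cvx P0 P1 s)).
    by apply: exit_tri => //; [apply: ltW | left].
  - by exists s; split => //; left.
  - by exists s; split => //; right; left.
have := orient_sum a b c P1; lra.
Qed.

Lemma orient_on_seg A B z : in_seg A B z -> orient A B z = 0.
Proof. by move=> [u [_ ->]]; rewrite /orient /=; ring. Qed.

Lemma param A B q1 q2 (s : R) : orient A B q1 != 0 -> in_seg A B (cvx q1 q2 s) ->
  s = orient A B q1 / (orient A B q1 - orient A B q2).
Proof.
move=> N /orient_on_seg; rewrite orient_cvx.
move: N; set g0 := orient A B q1; set g1 := orient A B q2; clearbody g0 g1 => N E.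
have N2 : g0 - g1 != 0.
  apply/negP => /eqP E2; move/eqP: N; apply; rewrite -E.
  have -> : g1 = g0 by apply/eqP; rewrite -subr_eq0 -oppr_eq0 opprB E2.
  ring.
apply: (mulIf N2); rewrite divfK //.
have : s * (g0 - g1) - g0 = - ((1 - s) * g0 + s * g1) by ring.
by rewrite E oppr0 => /eqP; rewrite subr_eq0 => /eqP.
Qed.

Lemma core A B C q1 q2 (s : R) : 0 < orient A B C -> 0 < orient A B q2 -> 0 <= s <= 1 ->
  in_seg A B (cvx q1 q2 s) -> orient q1 q2 A != 0 -> orient q1 q2 B != 0 ->
  ~ [/\ 0 < orient B C q2, 0 < orient C A q2 & 0 < orient A B q2] ->
  orient B C q2 != 0 -> orient C A q2 != 0 ->
  exists s' : R, (s < s' <= 1) /\ (in_seg B C (cvx q1 q2 s') \/ in_seg C A (cvx q1 q2 s')).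
Proof.
move=> HD Hq2 /andP [s0 s1] [u [/andP [u0 u1] Ez]] NA NB HN NB2 NC2.
have Oz : orient q1 q2 (cvx q1 q2 s) = 0 by rewrite orient_cvx orient_ab_a orient_ab_b; ring.
rewrite Ez orient_cvx in Oz.
have u0' : 0 < u.
  rewrite lt_neqAle u0 andbT; apply/negP => /eqP U; move: Oz; rewrite -U; move/eqP: NA.
  by move=> NA'; rewrite subr0 mul1r mul0r addr0.
have u1' : u < 1.
  rewrite lt_neqAle u1 andbT; apply/negP => /eqP U; move: Oz; rewrite U; move/eqP: NB.
  by move=> NB'; rewrite subrr mul0r mul1r add0r.
have HBz : 0 < orient B C (cvx q1 q2 s).
  rewrite Ez orient_cvx orient_ab_a -orient_cyc mulr0 addr0.
  by apply: mulr_gt0 => //; lra.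
have HCz : 0 < orient C A (cvx q1 q2 s).
  by rewrite Ez orient_cvx orient_ab_b mulr0 add0r -orient_cyc -orient_cyc mulr_gt0.
have HAz : orient A B (cvx q1 q2 s) = 0 by rewrite Ez orient_on_seg //; exists u; rewrite u0 u1.
have s1' : s < 1.
  rewrite lt_neqAle s1 andbT; apply/negP => /eqP S; move: HAz; rewrite S cvx1 => E.
  by rewrite E ltxx in Hq2.
have [sg [/andP [sg0 sg1] Hseg]] : exists sg : R, (0 < sg <= 1) /\
    (in_seg B C (cvx (cvx q1 q2 s) q2 sg) \/ in_seg C A (cvx (cvx q1 q2 s) q2 sg)).
  apply: exit_tri => //; first by rewrite HAz.
  case: (sgn_cases NB2) => S2; first by left.
  case: (sgn_cases NC2) => S3; first by right.
  by case: HN.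
exists (s + sg * (1 - s)); rewrite -cvx_cvx; split => //.
apply/andP; split; first by rewrite ltrDl; apply: mulr_gt0 => //; lra.
by nra.
Qed.

Lemma orient_lin a b p : orient a b p =
  ((b.2 - a.2) * a.1 - (b.1 - a.1) * a.2) + (-(b.2 - a.2)) * p.1 + (b.1 - a.1) * p.2.
Proof. rewrite /orient; ring. Qed.

Lemma nz_pos (x : R) : (x < 0) = false -> x != 0 -> 0 < x.
Proof. by move=> h1 h2; rewrite lt_neqAle eq_sym h2 /= leNgt h1. Qed.
Lemma nz_neg (x : R) : (0 < x) = false -> x != 0 -> x < 0.
Proof. by move=> h1 h2; rewrite lt_neqAle h2 /= leNgt h1. Qed.

Lemma tourn (I : finType) (P : I -> Prop) (r : I -> I -> Prop) :
  (forall i, ~ r i i) -> (forall i j k, P i -> P j -> P k -> r i j -> r j k -> r i k) ->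
  (exists i, P i) -> exists m, P m /\ forall w, P w -> ~ r m w.
Proof.
move=> Hirr Htr [i0 Hi0].
suff : forall s : seq I, (exists i, i \in s /\ P i) ->
    exists m, P m /\ forall w, w \in s -> P w -> ~ r m w.
  move=> /(_ (index_enum I)) [].
    by exists i0; rewrite mem_index_enum.
  by move=> m [Pm Hm]; exists m; split => // w; apply: Hm; rewrite mem_index_enum.
elim=> [[i []] //|x s IH [i [Hi Pi]]].
case: (classic (exists i, i \in s /\ P i)) => [/IH [m [Pm Hm]]|Hno].
  case: (classic (P x /\ r m x)) => [[Px Hmx]|Hn].
    exists x; split => // w; rewrite in_cons => /orP [/eqP ->|Hw] Pw; first exact: Hirr.
    by move=> Hxw; apply: (Hm w Hw Pw); apply: (Htr m x w).
  exists m; split => // w; rewrite in_cons => /orP [/eqP ->|Hw] Pw; last exact: Hm.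
  by move=> H; apply: Hn.
have Px : P x.
  move: Hi; rewrite in_cons => /orP [/eqP <- //|Hi]; by case: Hno; exists i.
exists x; split => // w; rewrite in_cons => /orP [/eqP ->|Hw] Pw; first exact: Hirr.
by case: Hno; exists w.
Qed.

Lemma sum0_ge0 (I : finType) (f : I -> R) (i : I) : (forall j, 0 <= f j) -> 0 < f i -> \sum_j f j = 0 -> False.
Proof.
move=> H0 Hi; rewrite (bigD1 i) //= => /eqP; rewrite gt_eqF //.
by apply: ltr_pwDl => //; apply: sumr_ge0.
Qed.

Section Hull.
Variables (V : finType) (pos : V -> point R).

Lemma sum_delta (v : V) (f : V -> R) : \sum_w (w == v)%:R * f w = f v.
Proof.
rewrite (bigD1 v) //= eqxx mul1r big1 ?addr0 // => w /negbTE ->; by rewrite mul0r.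
Qed.

Lemma hull_vert v : in_hull pos (pos v).
Proof.
exists (fun w => (w == v)%:R); split; first by move=> w; rewrite ler0n.
split; first by rewrite (eq_bigr (fun w => (w == v)%:R * 1)) ?sum_delta // => w _; rewrite mulr1.
by rewrite (sum_delta v (fun w => (pos w).1)) (sum_delta v (fun w => (pos w).2)); case: (pos v).
Qed.

Lemma sum_affine (l : V -> R) (k0 k1 k2 : R) :
  \sum_v l v = 1 ->
  \sum_v l v * (k0 + k1 * (pos v).1 + k2 * (pos v).2) =
  k0 + k1 * \sum_v l v * (pos v).1 + k2 * \sum_v l v * (pos v).2.
Proof.
move=> H1.
rewrite (eq_bigr (fun v => l v * k0 + k1 * (l v * (pos v).1) + k2 * (l v * (pos v).2)));
  last by move=> v _; ring.
by rewrite !big_split /= -!mulr_sumr -mulr_suml H1 mul1r.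
Qed.

Lemma hull_orient a b p l : (forall v, 0 <= l v) -> \sum_v l v = 1 ->
  p = (\sum_v l v * (pos v).1, \sum_v l v * (pos v).2) ->
  orient a b p = \sum_v l v * orient a b (pos v).
Proof.
move=> _ H1 ->.
rewrite [RHS](eq_bigr (fun v => l v * (((b.2 - a.2) * a.1 - (b.1 - a.1) * a.2) + (-(b.2 - a.2)) * (pos v).1 + (b.1 - a.1) * (pos v).2))); last by move=> v _; rewrite orient_lin.
by rewrite sum_affine // orient_lin.
Qed.

Lemma exists_pos (l : V -> R) : (forall v, 0 <= l v) -> \sum_v l v = 1 -> exists v, 0 < l v.
Proof.
move=> H0 H1; case: (boolP [exists v, 0 < l v]) => [/existsP//|/existsPn H].
have : \sum_v l v = 0.
  by apply: big1 => v _; apply/eqP; rewrite eq_le H0 andbT leNgt H.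
by rewrite H1 => /eqP; rewrite oner_eq0.
Qed.

Lemma hull_ge0 a b p : in_hull pos p -> (forall v, 0 <= orient a b (pos v)) -> 0 <= orient a b p.
Proof.
move=> [l [H0 [H1 Hp]]] Hv; rewrite (hull_orient a b H0 H1 Hp).
by apply: sumr_ge0 => v _; apply: mulr_ge0.
Qed.

Lemma hull_gt0 a b p : in_hull pos p -> (forall v, 0 < orient a b (pos v)) -> 0 < orient a b p.
Proof.
move=> [l [H0 [H1 Hp]]] Hv; rewrite (hull_orient a b H0 H1 Hp).
have [v Hv0] := exists_pos H0 H1.
rewrite (bigD1 v) //=; apply: ltr_wpDr; first by apply: sumr_ge0 => w _; apply: mulr_ge0 => //; apply: ltW.
exact: mulr_gt0.
Qed.

Lemma hull_both a b p : in_hull pos p -> orient a b p = 0 -> (forall v, orient a b (pos v) != 0) ->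
  (exists v, orient a b (pos v) < 0) /\ (exists v, 0 < orient a b (pos v)).
Proof.
move=> Hp H0 Hn; split.
  case: (boolP [exists v, orient a b (pos v) < 0]) => [/existsP//|/existsPn H].
  have : 0 < orient a b p.
    by apply: hull_gt0 => // v; apply: nz_pos (Hn v); rewrite (negbTE (H v)).
  by rewrite H0 ltxx.
case: (boolP [exists v, 0 < orient a b (pos v)]) => [/existsP//|/existsPn H].
have : 0 < orient b a p.
  apply: hull_gt0 => // v; rewrite orient_swap oppr_gt0.
  by apply: nz_neg (Hn v); rewrite (negbTE (H v)).
by rewrite orient_swap H0 oppr0 ltxx.
Qed.

Lemma hull_cvx p q (t : R) : in_hull pos p -> in_hull pos q -> 0 <= t <= 1 -> in_hull pos (cvx p q t).
Proof.
move=> [l [Hl0 [Hl1 ->]]] [m [Hm0 [Hm1 ->]]] /andP [t0 t1].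
exists (fun v => (1 - t) * l v + t * m v); split.
  by move=> v; apply: addr_ge0; apply: mulr_ge0 => //; rewrite subr_ge0.
split; first by rewrite /= big_split /= -!mulr_sumr Hl1 Hm1; ring.
rewrite /cvx /=; congr (_,_); rewrite !mulr_sumr -big_split /=;
  apply: eq_bigr => v _; ring.
Qed.

Lemma hull_comb (W : finType) (mu : W -> R) (y : W -> point R) :
  (forall w, 0 <= mu w) -> \sum_w mu w = 1 -> (forall w, in_hull pos (y w)) ->
  in_hull pos (\sum_w mu w * (y w).1, \sum_w mu w * (y w).2).
Proof.
move=> Hm0 Hm1 Hy.
pose L w := proj1_sig (constructive_indefinite_description _ (Hy w)).
have HL w : [/\ forall v, 0 <= L w v, \sum_v L w v = 1 &
    y w = (\sum_v L w v * (pos v).1, \sum_v L w v * (pos v).2)].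
  by rewrite /L; case: (constructive_indefinite_description _ _) => l [? [? ?]].
exists (fun v => \sum_w mu w * L w v); split.
  by move=> v; apply: sumr_ge0 => w _; apply: mulr_ge0 => //; case: (HL w).
split.
  rewrite /= exchange_big /= -Hm1; apply: eq_bigr => w _.
  by rewrite -mulr_sumr; case: (HL w) => _ -> _; rewrite mulr1.
congr (_,_).
  rewrite (eq_bigr (fun w => \sum_v mu w * L w v * (pos v).1)); last first.
    by move=> w _; case: (HL w) => _ _ ->; rewrite /= mulr_sumr; apply: eq_bigr => v _; rewrite mulrA.
  by rewrite exchange_big /=; apply: eq_bigr => v _; rewrite mulr_suml.
rewrite (eq_bigr (fun w => \sum_v mu w * L w v * (pos v).2)); last first.
  by move=> w _; case: (HL w) => _ _ ->; rewrite /= mulr_sumr; apply: eq_bigr => v _; rewrite mulrA.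
by rewrite exchange_big /=; apply: eq_bigr => v _; rewrite mulr_suml.
Qed.

Lemma tri_hull (i j k : V) x : 0 < orient (pos j) (pos k) x -> 0 < orient (pos k) (pos i) x ->
  0 < orient (pos i) (pos j) x -> in_hull pos x.
Proof.
move=> Ha Hb Hc; rewrite (tri_cvx Ha Hb Hc).
have [H1 H2] := tri_in01 Ha Hb Hc.
rewrite -(orient_sum (pos i) (pos j) (pos k) x).
by apply: (hull_cvx _ _ H2); [apply: (hull_cvx _ _ H1)|]; apply: hull_vert.
Qed.

Lemma tri_interior (i j k : V) x : 0 < orient (pos j) (pos k) x -> 0 < orient (pos k) (pos i) x ->
  0 < orient (pos i) (pos j) x -> in_interior (in_hull pos) x.
Proof.
move=> Ha Hb Hc; have [e [e0 He]] := ball3 Ha Hb Hc.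
exists e; split => // q /He [? ? ?]; exact: (@tri_hull i j k).
Qed.

Lemma dot_sum (p : point R) (x : R * R) l : \sum_v l v = 1 ->
  p = (\sum_v l v * (pos v).1, \sum_v l v * (pos v).2) ->
  \sum_v l v * (x.1 * ((pos v).1 - p.1) + x.2 * ((pos v).2 - p.2)) = 0.
Proof.
move=> H1 Hp.
rewrite (eq_bigr (fun v => l v * ((- (x.1 * p.1) - x.2 * p.2) + x.1 * (pos v).1 + x.2 * (pos v).2)));
  last by move=> v _; congr (_ * _); ring.
rewrite sum_affine //; move: Hp; case: p => p1 p2 [] -> -> /=; ring.
Qed.

Lemma cara p : in_hull pos p -> (forall v w, ~ in_seg (pos v) (pos w) p) ->
  exists i j k, [/\ 0 < orient (pos j) (pos k) p, 0 < orient (pos k) (pos i) p &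
                    0 < orient (pos i) (pos j) p].
Proof.
move=> [l [H0 [H1 Hp]]] Hns.
pose cr v w := orient p (pos v) (pos w).
pose dt v w := ((pos v).1 - p.1) * ((pos w).1 - p.1) + ((pos v).2 - p.2) * ((pos w).2 - p.2).
have Scr v : \sum_w l w * cr v w = 0.
  by rewrite -(hull_orient p (pos v) H0 H1 Hp) /orient; ring.
have Sdt v : \sum_w l w * dt v w = 0.
  rewrite -[RHS](dot_sum ((pos v).1 - p.1, (pos v).2 - p.2) H1 Hp).
  by apply: eq_bigr => w _; rewrite /dt /=; congr (_ * _); ring.
have Nz v : 0 < dt v v.
  have Hd0 : 0 <= dt v v by rewrite /dt -!expr2 addr_ge0 // sqr_ge0.
  rewrite lt_neqAle Hd0 andbT eq_sym; apply/negP => /eqP E; apply: (Hns v v).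
  exists 0; split; first by rewrite lexx ler01.
  move/eqP: E; rewrite /dt -!expr2 paddr_eq0 ?sqr_ge0 // !sqrf_eq0 !subr_eq0 => /andP [/eqP E1 /eqP E2].
  rewrite [p]surjective_pairing; congr (_,_); lra.
have F2 v w : cr v w = 0 -> 0 < dt v w.
  move=> Hc; rewrite ltNge; apply/negP => Hd; apply: (Hns v w).
  have Hn := Nz v.
  have E1 : dt v v * ((pos w).1 - p.1) = dt v w * ((pos v).1 - p.1) - cr v w * ((pos v).2 - p.2).
    by rewrite /dt /cr /orient; ring.
  have E2 : dt v v * ((pos w).2 - p.2) = dt v w * ((pos v).2 - p.2) + cr v w * ((pos v).1 - p.1).
    by rewrite /dt /cr /orient; ring.
  rewrite Hc !mul0r subr0 addr0 in E1 E2.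
  move: Hn Hd E1 E2; set n := dt v v; set d := dt v w; clearbody n d => Hn Hd E1 E2.
  have nd : n - d != 0 by rewrite gt_eqF //; lra.
  exists (n / (n - d)); split.
    apply/andP; split; first by apply: divr_ge0; lra.
    by rewrite ler_pdivrMr ?mul1r; lra.
  have nn : n != 0 by rewrite gt_eqF.
  have -> : (pos w).1 = p.1 + d * ((pos v).1 - p.1) / n.
    by rewrite -E1 mulrAC divff // mul1r; ring.
  have -> : (pos w).2 = p.2 + d * ((pos v).2 - p.2) / n.
    by rewrite -E2 mulrAC divff // mul1r; ring.
  rewrite [p in LHS]surjective_pairing; by congr (_,_); field; rewrite nn nd.

have crr v : cr v v = 0 by rewrite /cr /orient; ring.
have crA v w : cr w v = - cr v w by rewrite /cr /orient; ring.
have [i Hi] := exists_pos H0 H1.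
have HU : exists j, 0 < cr i j.
  apply: NNPP => HN.
  have Hle j : cr i j <= 0 by rewrite leNgt; apply/negP => H; apply: HN; exists j.
  have Hz j : l j * cr i j = 0.
    have Hs : \sum_w (- (l w * cr i w)) = 0 by rewrite sumrN Scr oppr0.
    have Hge k : 0 <= - (l k * cr i k) by rewrite -mulrN mulr_ge0 // oppr_ge0.
    have Hj := @psumr_eq0P _ _ xpredT (fun w => - (l w * cr i w)) (fun k _ => Hge k) Hs j isT.
    by rewrite -[LHS]opprK Hj oppr0.
  apply: (@sum0_ge0 _ (fun w => l w * dt i w) i _ _ (Sdt i)); last exact: mulr_gt0.
  move=> w; have := Hz w; move/eqP; rewrite mulf_eq0 => /orP [/eqP ->|/eqP Hc]; first by rewrite mul0r.
  by apply: mulr_ge0 => //; apply: ltW; apply: F2.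
have [j [Hj Hjmax]] : exists j, 0 < cr i j /\ forall w, 0 < cr i w -> ~ 0 < cr j w.
  have Hirr : forall v, ~ (0 < cr v v) by move=> v; rewrite crr ltxx.
  have Htr : forall u1 u2 u3 : V, 0 < cr i u1 -> 0 < cr i u2 -> 0 < cr i u3 -> 0 < cr u1 u2 -> 0 < cr u2 u3 -> 0 < cr u1 u3.
    move=> u1 u2 u3 Ha Hb Hc Hab Hbc.
    have E : cr i u2 * cr u1 u3 = cr i u1 * cr u2 u3 + cr i u3 * cr u1 u2 by rewrite /cr /orient; ring.
    have : 0 < cr i u2 * cr u1 u3 by rewrite E addr_gt0 // mulr_gt0.
    by rewrite pmulr_rgt0.
  have [m [Hm1 Hm2]] := @tourn V (fun w => 0 < cr i w) (fun u1 u2 => 0 < cr u1 u2) Hirr Htr HU.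
  by exists m; split => // w /Hm2.
have [k [Hk1 Hk2]] : exists k, cr i k < 0 /\ 0 < cr j k.
  apply: NNPP => HN.
  have Hle m : cr j m <= 0.
    rewrite leNgt; apply/negP => Hm.
    case: (ltgtP (cr i m) 0) => Him.
    - by apply: HN; exists m.
    - exact: (Hjmax m Him).
    - have E : dt i i * cr j m = dt i m * cr j i + cr i m * dt j i by rewrite /dt /cr /orient; ring.
      rewrite Him mul0r addr0 (crA i j) in E.
      have : dt i i * cr j m < 0 by rewrite E mulrN oppr_lt0 mulr_gt0 // F2.
      by rewrite pmulr_rlt0 // ltNge ltW.
  apply: (@sum0_ge0 _ (fun w => - (l w * cr j w)) i).
  - by move=> w; rewrite oppr_ge0; apply: mulr_ge0_le0.
  - by rewrite oppr_gt0 pmulr_rlt0 // (crA i j) oppr_lt0.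
  - by rewrite sumrN Scr oppr0.
exists i, j, k; split.
- by rewrite -orient_cyc.
- by rewrite -orient_cyc -/(cr k i) (crA i k) oppr_gt0.
- by rewrite -orient_cyc.
Qed.


Lemma bx (GP : general_position pos) q1 q2
  (G1 : forall v w, v != w -> orient (pos v) (pos w) q1 != 0)
  (G2 : forall v w, v != w -> orient (pos v) (pos w) q2 != 0)
  (G3 : forall v, orient q1 q2 (pos v) != 0)
  (Hq2 : ~ in_hull pos q2) (a0 b0 : V) z0 : a0 != b0 -> in_seg q1 q2 z0 ->
  in_seg (pos a0) (pos b0) z0 ->
  exists (a b : V), hull_adjacent pos a b /\ exists z, in_seg (pos a) (pos b) z /\ in_seg q1 q2 z.
Proof.
move=> ab0 [s0 [Hs0 ->]] Hz0.
pose C (ab : V * V) := ab.1 != ab.2 /\ exists s : R, 0 <= s <= 1 /\ in_seg (pos ab.1) (pos ab.2) (cvx q1 q2 s).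
pose F (ab : V * V) := orient (pos ab.1) (pos ab.2) q1 / (orient (pos ab.1) (pos ab.2) q1 - orient (pos ab.1) (pos ab.2) q2).
have [[a b] [[/= ab [s [Hs Hz]]] Hmax]] : exists m, C m /\ forall w, C w -> ~ F m < F w.
  apply: (@tourn _ C (fun x y => F x < F y)); first by move=> i; rewrite ltxx.
    by move=> i j k _ _ _; apply: lt_trans.
  by exists (a0, b0); split => //; exists s0.
have EF : s = F (a, b) by apply: param => //; apply: G1.
exists a, b; split; last by exists (cvx q1 q2 s); split => //; exists s.
split => //; apply: NNPP => HN.
have [c1 [c1a [c1b Hc1]]] : exists c : V, c != a /\ c != b /\ orient (pos a) (pos b) (pos c) < 0.
  apply: NNPP => H; apply: HN; left => w wa wb; apply: nz_pos.
    by apply/negP => Hw; apply: H; exists w.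
  by apply/eqP => E; apply: (GP a b w) => //; rewrite eq_sym.
have [c2 [c2a [c2b Hc2]]] : exists c : V, c != a /\ c != b /\ 0 < orient (pos a) (pos b) (pos c).
  apply: NNPP => H; apply: HN; right => w wa wb; apply: nz_neg.
    by apply/negP => Hw; apply: H; exists w.
  by apply/eqP => E; apply: (GP a b w) => //; rewrite eq_sym.
have Hcand (x y : V) (s' : R) : x != y -> s < s' <= 1 -> in_seg (pos x) (pos y) (cvx q1 q2 s') -> False.
  move=> xy /andP [ss' s'1] Hseg; apply: (Hmax (x, y)); first by split => //; exists s'; split => //; case/andP: Hs => ? ?; apply/andP; split; lra.
  by move: ss'; rewrite EF {1}(param (G1 _ _ xy) Hseg) /F /=.
case: (sgn_cases (G2 _ _ ab)) => Sg.
  have P1 : 0 < orient (pos b) (pos a) (pos c1) by rewrite orient_swap oppr_gt0.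
  have P2 : 0 < orient (pos b) (pos a) q2 by rewrite orient_swap oppr_gt0.
  have P3 : in_seg (pos b) (pos a) (cvx q1 q2 s).
    by case: Hz => u [? E]; exists (1 - u); rewrite E; split; [lra| rewrite /cvx /=; congr (_,_); ring].
  have P4 : ~ [/\ 0 < orient (pos a) (pos c1) q2, 0 < orient (pos c1) (pos b) q2 & 0 < orient (pos b) (pos a) q2].
    by move=> [? ? ?]; apply: Hq2; apply: (@tri_hull b a c1).
  have P5 : orient (pos a) (pos c1) q2 != 0 by apply: G2; rewrite eq_sym.
  have P6 : orient (pos c1) (pos b) q2 != 0 by apply: G2.
  have [s' [Hs' [H|H]]] := @core (pos b) (pos a) (pos c1) q1 q2 s P1 P2 Hs P3 (G3 b) (G3 a) P4 P5 P6.
  - by apply: (Hcand a c1 s') => //; rewrite eq_sym.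
  - exact: (Hcand c1 b s').
have P4 : ~ [/\ 0 < orient (pos b) (pos c2) q2, 0 < orient (pos c2) (pos a) q2 & 0 < orient (pos a) (pos b) q2].
  by move=> [? ? ?]; apply: Hq2; apply: (@tri_hull a b c2).
have P5 : orient (pos b) (pos c2) q2 != 0 by apply: G2; rewrite eq_sym.
have P6 : orient (pos c2) (pos a) q2 != 0 by apply: G2.
have [s' [Hs' [H|H]]] := @core (pos a) (pos b) (pos c2) q1 q2 s Hc2 Sg Hs Hz (G3 a) (G3 b) P4 P5 P6.
- by apply: (Hcand b c2 s') => //; rewrite eq_sym.
- exact: (Hcand c2 a s').
Qed.

End Hull.

Lemma seg_same a p : in_seg a a p -> p = a.
Proof. by move=> [t [_ ->]]; rewrite [a in RHS]surjective_pairing; congr (_,_); ring. Qed.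

Lemma onz_cyc a b c : orient a b c != 0 -> orient b c a != 0.
Proof. by rewrite orient_cyc. Qed.
Lemma onz_swap a b c : orient a b c != 0 -> orient b a c != 0.
Proof. by rewrite orient_swap oppr_eq0. Qed.

Lemma path_sign (T : finType) (e : rel T) (f : T -> R) (x y : T) : connect e x y ->
  f x < 0 -> 0 < f y -> (forall v, f v != 0) -> exists u v, [/\ e u v, f u < 0 & 0 < f v].
Proof.
move=> /connectP [pth Hp ->] {y} Hx Hy Hn.
elim: pth x Hp Hx Hy => [|z pth IH] x /=; first by move=> _ H1 H2; move: (lt_trans H1 H2); rewrite ltxx.
move=> /andP [Hxz Hp] Hx Hy.
case: (sgn_cases (Hn z)) => Hz; first exact: (IH z Hp Hz Hy).
by exists x, z; split.
Qed.

Lemma opp_signs (fa fb u : R) : fa != 0 -> fb != 0 -> 0 <= u <= 1 -> (1 - u) * fa + u * fb = 0 ->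
  (fa < 0 /\ 0 < fb) \/ (0 < fa /\ fb < 0).
Proof.
move=> Na Nb /andP [u0 u1] E.
case: (sgn_cases Na) => Ha; case: (sgn_cases Nb) => Hb; [|by left|by right|].
- by exfalso; move: E; nra.
- by exfalso; move: E; nra.
Qed.

Lemma chord (V : finType) (pos : V -> point R) C D x y : orient C D x = 0 -> C != D ->
  in_seg C D y -> in_hull pos x -> in_hull pos y -> ~ in_hull pos C -> ~ in_hull pos D ->
  in_seg C D x.
Proof.
move=> Hx CD [u [/andP [u0 u1] Ey]] Hhx Hhy NC ND.
pose n := (D.1 - C.1) ^+ 2 + (D.2 - C.2) ^+ 2.
have nP : 0 < n.
  rewrite lt_neqAle addr_ge0 ?sqr_ge0 // andbT eq_sym; apply/negP.
  rewrite paddr_eq0 ?sqr_ge0 // !sqrf_eq0 !subr_eq0 => /andP [/eqP E1 /eqP E2].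
  by move/negP: CD; apply; rewrite [C]surjective_pairing [D]surjective_pairing E1 E2.
have nN : n != 0 by rewrite gt_eqF.
pose s := ((x.1 - C.1) * (D.1 - C.1) + (x.2 - C.2) * (D.2 - C.2)) / n.
have Ex : x = cvx C D s.
  have E1 : n * (x.1 - C.1) = (s * n) * (D.1 - C.1) - orient C D x * (D.2 - C.2).
    by rewrite /s divfK // /n /orient; ring.
  have E2 : n * (x.2 - C.2) = (s * n) * (D.2 - C.2) + orient C D x * (D.1 - C.1).
    by rewrite /s divfK // /n /orient; ring.
  rewrite Hx !mul0r ?subr0 ?addr0 in E1 E2.
  move: E1 E2; clearbody s n => E1 E2.
  rewrite [x]surjective_pairing /cvx /=; congr (_,_).
  - apply: (mulfI nN); rewrite mulrDr; rewrite -[n * x.1](addrNK (n * C.1)) -mulrBr E1; ring.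
  - apply: (mulfI nN); rewrite mulrDr; rewrite -[n * x.2](addrNK (n * C.2)) -mulrBr E2; ring.
move: Ex; clearbody s => Ex.
case: (lerP 0 s) => s0; last first.
  exfalso; apply: NC.
  have -> : C = cvx y x (u / (u - s)).
    have us : u - s != 0 by rewrite gt_eqF //; lra.
    rewrite Ey Ex [C in LHS]surjective_pairing /cvx /=; congr (_,_); field => //.
  apply: hull_cvx => //; apply/andP; split.
    by apply: divr_ge0 => //; lra.
  by rewrite ler_pdivrMr ?mul1r; lra.
case: (lerP s 1) => s1; first by exists s; rewrite s0 s1.
exfalso; apply: ND.
have -> : D = cvx y x ((1 - u) / (s - u)).
  have us : s - u != 0 by rewrite gt_eqF //; lra.
  rewrite Ey Ex [D in LHS]surjective_pairing /cvx /=; congr (_,_); field => //.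
apply: hull_cvx => //; apply/andP; split.
  by apply: divr_ge0; lra.
by rewrite ler_pdivrMr ?mul1r; lra.
Qed.

End Geo2.

Section Claims.
Variable R : realType.
Variables (A B : finType) (pa : A -> point R) (pb : B -> point R).
Hypothesis gpA : general_position pa.
Hypothesis gpB : general_position pb.
Hypothesis xAB : forall a1 a2 b, a1 != a2 -> orient (pa a1) (pa a2) (pb b) != 0.
Hypothesis xBA : forall b1 b2 a, b1 != b2 -> orient (pb b1) (pb b2) (pa a) != 0.
Hypothesis djv : forall a b, pa a <> pb b.

Lemma noseg_B (b : B) : forall v w, ~ in_seg (pa v) (pa w) (pb b).
Proof.
move=> v w Hs; case: (eqVneq v w) => [E|vw].
  by rewrite E in Hs; move/esym: (seg_same Hs); apply: djv.
by move/eqP: (xAB b vw); apply; apply: orient_on_seg.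
Qed.

Lemma tri_ne (i j k : A) x : 0 < orient (pa j) (pa k) x -> j != k.
Proof. by apply: contraTneq => ->; rewrite orient_aa ltxx. Qed.

Lemma step_cross (b1 b2 : B) : b1 != b2 -> in_hull pa (pb b1) -> ~ in_hull pa (pb b2) ->
  exists (u v : A), hull_adjacent pa u v /\ exists z, in_seg (pa u) (pa v) z /\ in_seg (pb b1) (pb b2) z.
Proof.
move=> b12 H1 H2.
have [i [j [k [Ha Hb Hc]]]] := cara H1 (@noseg_B b1).
have [s [/andP [s0 s1] Hex]] := exit3 Ha Hb Hc
  (fun '(And3 x y z) => H2 (tri_hull x y z)) (xAB b2 (tri_ne i Ha)) (xAB b2 (tri_ne j Hb))
  (xAB b2 (tri_ne k Hc)).
have Hz : in_seg (pb b1) (pb b2) (cvx (pb b1) (pb b2) s) by exists s; rewrite ltW.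
have G1 v w : v != w -> orient (pa v) (pa w) (pb b1) != 0 by apply: xAB.
have G2 v w : v != w -> orient (pa v) (pa w) (pb b2) != 0 by apply: xAB.
have G3 v : orient (pb b1) (pb b2) (pa v) != 0 by apply: xBA.
case: Hex => [H|[H|H]].
- exact: (bx gpA G1 G2 G3 H2 (tri_ne k Hc) Hz H).
- exact: (bx gpA G1 G2 G3 H2 (tri_ne i Ha) Hz H).
- exact: (bx gpA G1 G2 G3 H2 (tri_ne j Hb) Hz H).
Qed.

Lemma propagate (eB : rel B) : (forall x y, connect eB x y) -> irreflexive eB ->
  (forall u v, hull_adjacent pa u v -> forall p, in_seg (pa u) (pa v) p -> ~ in_tree pb eB p) ->
  (exists b, in_hull pa (pb b)) -> forall b, in_hull pa (pb b).
Proof.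
move=> Hc Hirr HN [b0 Hb0] b.
have Hstep x y : eB x y -> in_hull pa (pb x) -> in_hull pa (pb y).
  move=> Exy Hx; apply: NNPP => Hy.
  have xy : x != y by apply: contraTneq Exy => ->; rewrite Hirr.
  have [u [v [Huv [z [Hz1 Hz2]]]]] := step_cross xy Hx Hy.
  by apply: (HN u v Huv z Hz1); right; exists x, y.
case/connectP: (Hc b0 b) => pth Hp ->.
elim: pth b0 Hb0 Hp => [|z pth IH] x //= Hx /andP [Hxz Hp].
exact: (IH z (Hstep x z Hxz Hx) Hp).
Qed.

Lemma contain : (forall b, in_hull pa (pb b)) -> forall p, in_hull pb p -> in_interior (in_hull pa) p.
Proof.
move=> Hall p [mu [Hm0 [Hm1 Hp]]].
have He b : exists e : R, 0 < e /\ forall q : point R,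
    (q.1 - (pb b).1) ^+ 2 + (q.2 - (pb b).2) ^+ 2 < e -> in_hull pa q.
  have [i [j [k [Ha Hb Hc]]]] := cara (Hall b) (@noseg_B b).
  exact: (tri_interior Ha Hb Hc).
pose E b := proj1_sig (constructive_indefinite_description _ (He b)).
have HE b : 0 < E b /\ forall q : point R,
    (q.1 - (pb b).1) ^+ 2 + (q.2 - (pb b).2) ^+ 2 < E b -> in_hull pa q.
  by rewrite /E; case: (constructive_indefinite_description _ _).
pose S := \sum_b (E b)^-1.
have S0 : 0 <= S by apply: sumr_ge0 => b _; rewrite invr_ge0 ltW //; case: (HE b).
have S1 : 0 < 1 + S by lra.
exists (1 + S)^-1; split; first by rewrite invr_gt0.
move=> q Hq.
pose y b : point R := ((pb b).1 + (q.1 - p.1), (pb b).2 + (q.2 - p.2)).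
have Hy b : in_hull pa (y b).
  case: (HE b) => Eb0 HEb; apply: HEb; rewrite /y /=.
  have -> : (pb b).1 + (q.1 - p.1) - (pb b).1 = q.1 - p.1 by ring.
  have -> : (pb b).2 + (q.2 - p.2) - (pb b).2 = q.2 - p.2 by ring.
  apply: (lt_le_trans Hq).
  have Hb : (E b)^-1 <= S.
    rewrite /S (bigD1 b) //= lerDl; apply: sumr_ge0 => c _; rewrite invr_ge0 ltW //; by case: (HE c).
  rewrite -[E b]invrK lef_pV2 ?posrE ?invr_gt0 //; lra.
have := hull_comb Hm0 Hm1 Hy.
have -> : (\sum_b mu b * (y b).1, \sum_b mu b * (y b).2) = q => //.
rewrite /y /= [q]surjective_pairing; congr (_,_).
  rewrite (eq_bigr (fun b => mu b * (pb b).1 + mu b * (q.1 - p.1))); last by move=> b _; rewrite mulrDr.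
  rewrite big_split /= -mulr_suml Hm1 mul1r Hp /=; ring.
rewrite (eq_bigr (fun b => mu b * (pb b).2 + mu b * (q.2 - p.2))); last by move=> b _; rewrite mulrDr.
rewrite big_split /= -mulr_suml Hm1 mul1r Hp /=; ring.
Qed.

Lemma PX (i j k : A) x (g1 g2 : B) : 0 < orient (pa j) (pa k) x -> 0 < orient (pa k) (pa i) x ->
  0 < orient (pa i) (pa j) x -> in_seg (pb g1) (pb g2) x -> ~ in_hull pa (pb g2) ->
  exists (f1 f2 : A), f1 != f2 /\ exists z, in_seg (pa f1) (pa f2) z /\ in_seg (pb g1) (pb g2) z.
Proof.
move=> Ha Hb Hc [t [/andP [t0 t1] Ex]] H2.
have [s [/andP [s0 s1] Hex]] := exit3 Ha Hb Hc
  (fun '(And3 x y z) => H2 (tri_hull x y z)) (xAB g2 (tri_ne i Ha)) (xAB g2 (tri_ne j Hb))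
  (xAB g2 (tri_ne k Hc)).
have Hz : in_seg (pb g1) (pb g2) (cvx x (pb g2) s).
  exists (t + s * (1 - t)); split; first by apply/andP; split; nra.
  by rewrite Ex -/(cvx (pb g1) (pb g2) t) cvx_cvx.
have n1 := tri_ne k Hc; have n2 := tri_ne i Ha; have n3 := tri_ne j Hb.
case: Hex => H.
  by exists i, j; split => //; exists (cvx x (pb g2) s); split.
case: H => H.
  by exists j, k; split => //; exists (cvx x (pb g2) s); split.
by exists k, i; split => //; exists (cvx x (pb g2) s); split.
Qed.

End Claims.


Section Case4.
Variable R : realType.
Variables (A B : finType) (pa : A -> point R) (pb : B -> point R).
Hypothesis gpA : general_position pa.
Hypothesis gpB : general_position pb.
Hypothesis xAB : forall a1 a2 b, a1 != a2 -> orient (pa a1) (pa a2) (pb b) != 0.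
Hypothesis xBA : forall b1 b2 a, b1 != b2 -> orient (pb b1) (pb b2) (pa a) != 0.

Lemma seg_hull (V : finType) (pos : V -> point R) v w z : in_seg (pos v) (pos w) z -> in_hull pos z.
Proof. by move=> [t [Ht ->]]; apply: (hull_cvx (hull_vert pos v) (hull_vert pos w) Ht). Qed.

Lemma pair_cross (NA : forall a, ~ in_hull pb (pa a)) (NB : forall b, ~ in_hull pa (pb b))
  p : in_hull pa p -> in_hull pb p ->
  exists (a1 a2 : A) (b1 b2 : B), [/\ a1 != a2, b1 != b2 &
    exists z, in_seg (pa a1) (pa a2) z /\ in_seg (pb b1) (pb b2) z].
Proof.
move=> HpA HpB.
have neA (v w : A) z : in_seg (pa v) (pa w) z -> in_hull pb z -> v != w.
  by move=> Hs Hz; apply/eqP => E; rewrite E in Hs; apply: (NA w); rewrite -(seg_same Hs).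
have neB (v w : B) z : in_seg (pb v) (pb w) z -> in_hull pa z -> v != w.
  by move=> Hs Hz; apply/eqP => E; rewrite E in Hs; apply: (NB w); rewrite -(seg_same Hs).
case: (classic (exists v w, in_seg (pa v) (pa w) p)) => [[a1 [a2 Hsa]]|HnA].
  have a12 := neA _ _ _ Hsa HpB.
  case: (classic (exists v w, in_seg (pb v) (pb w) p)) => [[b1 [b2 Hsb]]|HnB].
    by exists a1, a2, b1, b2; split => //; [exact: neB _ _ _ Hsb HpA | exists p].
  have [i [j [k [Ha Hb Hc]]]] := cara HpB (fun v w H => HnB (ex_intro _ v (ex_intro _ w H))).
  have [f1 [f2 [f12 [z [Hz1 Hz2]]]]] := @PX R B A pb pa xBA i j k p a1 a2 Ha Hb Hc Hsa (NA a2).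
  by exists a1, a2, f1, f2; split => //; exists z.
have [i [j [k [Ha Hb Hc]]]] := cara HpA (fun v w H => HnA (ex_intro _ v (ex_intro _ w H))).
case: (classic (exists v w, in_seg (pb v) (pb w) p)) => [[b1 [b2 Hsb]]|HnB].
  have b12 := neB _ _ _ Hsb HpA.
  have [f1 [f2 [f12 [z [Hz1 Hz2]]]]] := @PX R A B pa pb xAB i j k p b1 b2 Ha Hb Hc Hsb (NB b2).
  by exists f1, f2, b1, b2; split => //; exists z.
have [i' [j' [k' [Ha' Hb' Hc']]]] := cara HpB (fun v w H => HnB (ex_intro _ v (ex_intro _ w H))).
have [s [/andP [s0 s1] Hex]] := exit3 Ha Hb Hc
  (fun '(And3 x y z) => NB i' (tri_hull x y z)) (xAB i' (tri_ne i Ha)) (xAB i' (tri_ne j Hb))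
  (xAB i' (tri_ne k Hc)).
set y := cvx p (pb i') s in Hex.
have Hy (f1 f2 : A) : f1 != f2 -> in_seg (pa f1) (pa f2) y ->
  exists (a1 a2 : A) (b1 b2 : B), [/\ a1 != a2, b1 != b2 &
    exists z, in_seg (pa a1) (pa a2) z /\ in_seg (pb b1) (pb b2) z].
  move=> f12 Hs.
  have s1' : s < 1.
    rewrite lt_neqAle s1 andbT; apply/negP => /eqP S; apply: (NB i').
    by move: Hs; rewrite /y S cvx1; apply: seg_hull.
  have HD : 0 < orient (pb j') (pb k') (pb i').
    by rewrite -orient_cyc; have := orient_sum (pb i') (pb j') (pb k') p; lra.
  have Sa : 0 < orient (pb j') (pb k') y.
    by rewrite /y orient_cvx; apply: addr_gt0; apply: mulr_gt0 => //; lra.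
  have Sb : 0 < orient (pb k') (pb i') y.
    by rewrite /y orient_cvx orient_ab_b mulr0 addr0; apply: mulr_gt0 => //; lra.
  have Sc : 0 < orient (pb i') (pb j') y.
    by rewrite /y orient_cvx orient_ab_a mulr0 addr0; apply: mulr_gt0 => //; lra.
  have [g1 [g2 [g12 [z [Hz1 Hz2]]]]] := @PX R B A pb pa xBA i' j' k' y f1 f2 Sa Sb Sc Hs (NA f2).
  by exists f1, f2, g1, g2; split => //; exists z.
case: Hex => [H|[H|H]].
- exact: (Hy _ _ (tri_ne k Hc) H).
- exact: (Hy _ _ (tri_ne i Ha) H).
- exact: (Hy _ _ (tri_ne j Hb) H).
Qed.

Lemma case4 (eA : rel A) (HcA : forall x y, connect eA x y)
  (NA : forall a, ~ in_hull pb (pa a)) (NB : forall b, ~ in_hull pa (pb b))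
  p : in_hull pa p -> in_hull pb p ->
  exists (c d : B), hull_adjacent pb c d /\
    exists x, in_seg (pb c) (pb d) x /\ in_tree pa eA x.
Proof.
move=> HpA HpB.
have [a1 [a2 [b1 [b2 [a12 b12 [z [Hz1 Hz2]]]]]]] := pair_cross NA NB HpA HpB.
have [c [d [Hcd [z' [Hz1' Hz2']]]]] := bx gpB (fun v w vw => xBA a1 vw) (fun v w vw => xBA a2 vw)
  (fun v => xAB v a12) (NA a2) b12 Hz1 Hz2.
have cd : c != d by case: Hcd.
have [a [b [Hab [z'' [Hz1'' Hz2'']]]]] := bx gpA (fun v w vw => xAB c vw) (fun v w vw => xAB d vw)
  (fun v => xBA v cd) (NB d) a12 Hz1' Hz2'.
exists c, d; split => //.
pose f v := orient (pb c) (pb d) (pa v).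
have fN v : f v != 0 by apply: xBA.
have Hsig : (f a < 0 /\ 0 < f b) \/ (0 < f a /\ f b < 0).
  case: Hz1'' => u [u01 Eu].
  apply: (opp_signs (fN a) (fN b) u01).
  by rewrite /f -orient_cvx; apply: orient_on_seg; rewrite /cvx -Eu.
have [r1 [r2 [Er f1 f2]]] : exists u v, [/\ eA u v, f u < 0 & 0 < f v].
  case: Hsig => [[Ha Hb]|[Ha Hb]].
    exact: (path_sign (HcA a b) Ha Hb fN).
  exact: (path_sign (HcA b a) Hb Ha fN).
have [/andP [t0 t1] Et _] := @fz R (f r2) (f r1) 1 1 f2 f1 ltr01 (or_introl ler01).
set t := f r2 / (f r2 - f r1) in t0 t1 Et.
set x := cvx (pa r2) (pa r1) t.
have Hx0 : orient (pb c) (pb d) x = 0 by rewrite /x orient_cvx.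
have HxT : in_tree pa eA x.
  right; exists r1, r2; split => //; exists (1 - t); split; first by apply/andP; split; lra.
  by rewrite /x cvxC.
exists x; split => //.
apply: (chord (pos := pa) Hx0 _ Hz2'' _ _ (NB c) (NB d)).
- apply/eqP => E; move: (fN a); rewrite /f E orient_aa eqxx //.
- by apply: (hull_cvx (hull_vert pa r2) (hull_vert pa r1)); apply/andP; split; lra.
- exact: seg_hull Hz1''.
Qed.

End Case4.

Theorem lemma5 (R : realType)
  (V : finType) (posR : V -> point R) (eR : rel V)
  (W : finType) (posS : W -> point R) (eS : rel W) :
  geom_tree posR eR ->
  geom_tree posS eS ->
  general_position (join_pos posR posS) ->
  (forall p, in_tree posR eR p -> ~ in_tree posS eS p) ->
  (exists p, in_hull posR p /\ in_hull posS p) ->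
  (forall p, in_hull posR p -> in_interior (in_hull posS) p) \/
  (forall p, in_hull posS p -> in_interior (in_hull posR) p) \/
  (exists u v : V, hull_adjacent posR u v /\
     exists p, in_seg (posR u) (posR v) p /\ in_tree posS eS p) \/
  (exists u v : W, hull_adjacent posS u v /\
     exists p, in_seg (posS u) (posS v) p /\ in_tree posR eR p).
Proof.
move=> [[_ _ _ irrR] [conR _ _ _]] [[_ _ _ irrS] [conS _ _ _]] GP DJ [p [HpR HpS]].
have gpR : general_position posR.
  by move=> i j k ij jk ik; apply: (GP (inl i) (inl j) (inl k)).
have gpS : general_position posS.
  by move=> i j k ij jk ik; apply: (GP (inr i) (inr j) (inr k)).
have xRS : forall a1 a2 b, a1 != a2 -> orient (posR a1) (posR a2) (posS b) != 0.
  by move=> a1 a2 b a12; apply/eqP => E; apply: (GP (inl a1) (inl a2) (inr b)).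
have xSR : forall b1 b2 a, b1 != b2 -> orient (posS b1) (posS b2) (posR a) != 0.
  by move=> b1 b2 a b12; apply/eqP => E; apply: (GP (inr b1) (inr b2) (inl a)).
have djRS : forall a b, posR a <> posS b.
  by move=> a b E; apply: (DJ (posR a)); [left; exists a | left; exists b].
have djSR : forall b a, posS b <> posR a.
  by move=> b a E; apply: (djRS a b).
case: (classic (exists u v : V, hull_adjacent posR u v /\
     exists p, in_seg (posR u) (posR v) p /\ in_tree posS eS p)) => [H|N1].
  by right; right; left.
case: (classic (exists u v : W, hull_adjacent posS u v /\
     exists p, in_seg (posS u) (posS v) p /\ in_tree posR eR p)) => [H|N2].
  by right; right; right.
have N1' : forall u v, hull_adjacent posR u v -> forall p, in_seg (posR u) (posR v) p -> ~ in_tree posS eS p.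
  by move=> u v Huv q Hq Ht; apply: N1; exists u, v; split => //; exists q.
have N2' : forall u v, hull_adjacent posS u v -> forall p, in_seg (posS u) (posS v) p -> ~ in_tree posR eR p.
  by move=> u v Huv q Hq Ht; apply: N2; exists u, v; split => //; exists q.
case: (classic (exists s, in_hull posR (posS s))) => [Hs|Hns].
  right; left; apply: (contain xRS djRS).
  exact: (propagate gpR xRS xSR djRS conS irrS N1' Hs).
case: (classic (exists r, in_hull posS (posR r))) => [Hr|Hnr].
  left; apply: (contain xSR djSR).
  exact: (propagate gpS xSR xRS djSR conR irrR N2' Hr).
exfalso.
have NA : forall a, ~ in_hull posS (posR a) by move=> a H; apply: Hnr; exists a.
have NB : forall b, ~ in_hull posR (posS b) by move=> b H; apply: Hns; exists b.
have [c [d [Hcd [x [Hx1 Hx2]]]]] := case4 gpR gpS xRS xSR conR NA NB HpR HpS.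
by apply: N2; exists c, d; split => //; exists x.
Qed.
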